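(* Let $m,n$ be positive integers. For all $\sigma\in\mathfrak S_{mn}$ and all partitions $\lambda$ with $\ell(\lambda)\le mn$, $l(\lambda;\sigma)\succeq l(\lambda;Id)$.
   Context: $\lambda=(\lambda_1,\dots,\lambda_{mn})$ padded with zeros; $\mathbf u\succeq\mathbf v$ means $u_i\ge v_i$ for all $i$; $Id$ is the identity permutation. Variables $s_0,\dots,s_{m-1},t_1,\dots,t_{n-2}$; $T=t_1\cdots t_{n-2}$; $x_i=s_1\cdots s_iT^i$ ($1\le i\le m-1$), $y_j=s_0s_1\cdots s_{m-1}T^{m-1}t_1\cdots t_{j-1}$ ($1\le j\le n-1$); $e(M)\in\mathbb Z^{m+n-2}$ is the exponent vector of a monomial $M$ (coordinates $s_0,\dots,s_{m-1},t_1,\dots,t_{n-2}$). Let $(z_1,\dots,z_{mn})=(1,x_1,\dots,x_{m-1},y_1,\dots,y_{n-1},x_1y_1,\dots,x_1y_{n-1},x_2y_1,\dots,x_{m-1}y_{n-1})$ and, for $\sigma\in\mathfrak S_{mn}$, $l(\lambda;\sigma)=e\big(\prod_{i=1}^{mn}z_i^{\lambda_{\sigma(i)}+mn-\sigma(i)}\big)$ (the concatenation of the paper's $l_s(\lambda;\sigma)$ and $l_t(\lambda;\sigma)$). *)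

(* Defs.v *)
From mathcomp Require Import all_boot all_fingroup.
Unset Printing Implicit Defensive.

(* Monomials in s_0..s_{m-1}, t_1..t_{n-2} are represented by their exponent
   vectors, as functions nat -> nat: coordinate c < m is the exponent of s_c,
   coordinate m + k - 1 (1 <= k <= n-2) is the exponent of t_k. *)
Definition mon := nat -> nat.
Definition mone : mon := fun _ => 0.
Definition mmul (f g : mon) : mon := fun c => f c + g c.
Definition mexp (f : mon) (e : nat) : mon := fun c => f c * e.
Definition mprod (s : seq mon) : mon := foldr mmul mone s.

Definition svar (a : nat) : mon := fun c => nat_of_bool (c == a).
Definition tvar (m k : nat) : mon := fun c => nat_of_bool (c == m + k.-1).

Definition Tmon (m n : nat) : mon := mprod [seq tvar m k | k <- iota 1 n.-2].
Definition xmon (m n i : nat) : mon :=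
  mmul (mprod [seq svar a | a <- iota 1 i]) (mexp (Tmon m n) i).
Definition ymon (m n j : nat) : mon :=
  mmul (mprod [seq svar a | a <- iota 0 m])
       (mmul (mexp (Tmon m n) m.-1) (mprod [seq tvar m k | k <- iota 1 j.-1])).

Definition zseq (m n : nat) : seq mon :=
  mone :: [seq xmon m n i | i <- iota 1 m.-1]
       ++ [seq ymon m n j | j <- iota 1 n.-1]
       ++ flatten [seq [seq mmul (xmon m n i) (ymon m n j) | j <- iota 1 n.-1]
                  | i <- iota 1 m.-1].

(* A partition: nonincreasing sequence of positive integers; lambda_i (1-based)
   is nth 0 lam (i-1), i.e. padded with zeros. *)
Definition is_partition (lam : seq nat) : bool :=
  sorted geq lam && all (fun x => 0 < x) lam.

(* l(lambda; sigma) = e( prod_{i=1}^{mn} z_i^{lambda_{sigma(i)} + mn - sigma(i)} ),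
   with 0-based index q = i - 1, so sigma(i) (1-based) = (sigma q).+1. *)
Definition lvec (m n : nat) (lam : seq nat) (sigma : 'S_(m * n)) : mon :=
  mprod [seq mexp (nth mone (zseq m n) q)
                  (nth 0 lam (sigma q) + (m * n - (sigma q).+1))
        | q : 'I_(m * n) <- enum 'I_(m * n)].

Definition exp_ge (m n : nat) (u v : mon) : Prop :=
  forall c, c < m + n.-2 -> v c <= u c.

(* Main.v *)
Require Import Defs.
From mathcomp Require Import all_boot all_fingroup zify.

Lemma subset_sum N (w : 'I_N -> nat) (s : 'S_N) (P : pred 'I_N) :
  (forall i j : 'I_N, i <= j -> w i <= w j) ->
  (forall i j : 'I_N, i <= j -> P j -> P i) ->
  \sum_(q | P q) w q <= \sum_(q | P (s q)) w q.
Proof.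
move=> hw hP.
set B := [set q | P q]; set A := [set q | P (s q)].
have eB : \sum_(q | P q) w q = \sum_(q in B) w q by apply: eq_bigl => q; rewrite inE.
have eA : \sum_(q | P (s q)) w q = \sum_(q in A) w q by apply: eq_bigl => q; rewrite inE.
rewrite eA eB (big_setID (A:=B) A) [X in _ <= X](big_setID (A:=A) B) /= setIC leq_add2l.
have cA : #|A| = #|B|.
  have -> : A = s @^-1: B by apply/setP => q; rewrite !inE.
  by rewrite card_preimset //; apply: perm_inj.
have cD : #|B :\: A| = #|A :\: B|.
  have h1 := cardsID B A; have h2 := cardsID A B; rewrite setIC in h2. move: h1 h2. rewrite cA. by move=> h1 h2; apply/(@addnI #|A :&: B|); rewrite h1 h2.
set v := \max_(q in B :\: A) w q.
apply: (@leq_trans (#|B :\: A| * v)).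
  rewrite -sum_nat_const; apply: leq_sum => q hq; exact: leq_bigmax_cond.
rewrite cD -sum_nat_const; apply: leq_sum => q; rewrite !inE => /andP [nPq Psq].
apply/bigmax_leqP => q'; rewrite !inE => /andP [nPsq' Pq'].
apply: hw; rewrite leqNgt; apply/negP => lt; move: nPq; rewrite (hP q q') //.
exact: ltnW.
Qed.

Lemma sum_lt K x : \sum_(t < K) (t < x) = minn x K.
Proof.
elim: K => [|K IH]; first by rewrite big_ord0; lia.
rewrite big_ord_recr /= IH; lia.
Qed.

Lemma rearr N (w a : 'I_N -> nat) (s : 'S_N) :
  (forall i j : 'I_N, i <= j -> w i <= w j) ->
  (forall i j : 'I_N, i <= j -> a j <= a i) ->
  \sum_(q < N) w q * a q <= \sum_(q < N) w q * a (s q).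
Proof.
move=> hw ha.
set K := \max_(k < N) a k.
have layer : forall f : 'I_N -> nat, (forall q, f q <= K) ->
   \sum_(q < N) w q * f q = \sum_(t < K) \sum_(q | t < f q) w q.
  move=> f hf.
  under [RHS]eq_bigr => t _ do rewrite big_mkcond.
  rewrite [RHS]exchange_big /=; apply: eq_bigr => q _.
  rewrite -[in LHS](minn_idPl (hf q)) -sum_lt big_distrr /=.
  by apply: eq_bigr => t _; case: (t < f q); rewrite ?muln1 ?muln0.
rewrite !layer; last by move=> q; exact: leq_bigmax.
  - apply: leq_sum => t _. apply: subset_sum => // i j hij hj.
    exact: leq_trans hj (ha _ _ hij).
  - by move=> q; exact: leq_bigmax.
Qed.

Lemma mprod_eval l c : mprod l c = \sum_(f <- l) f c.
Proof. elim: l => [|f l IH]; first by rewrite big_nil. by rewrite big_cons /= /mmul IH. Qed.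

Lemma msvar s l c : mprod [seq svar a | a <- iota s l] c = (s <= c < s + l).
Proof.
elim: l s => [|l IH] s /=; first by rewrite /mone; lia.
rewrite /mmul IH /svar; lia.
Qed.

Lemma mtvar m s l c : mprod [seq tvar m k | k <- iota s.+1 l] c = (m + s <= c < m + s + l).
Proof.
elim: l s => [|l IH] s /=; first by rewrite /mone; lia.
rewrite /mmul IH /tvar /=; lia.
Qed.

Lemma Tval m n c : Tmon m n c = (m <= c < m + n.-2).
Proof. by rewrite /Tmon mtvar addn0. Qed.

Lemma xval_s m n i c : c < m -> xmon m n i c = (1 <= c < i.+1).
Proof. move=> h; rewrite /xmon /mmul /mexp msvar Tval.
have -> : (m <= c < m + n.-2) = false by lia. rewrite mul0n; lia. Qed.
Lemma xval_t m n i c : i < m -> m <= c < m + n.-2 -> xmon m n i c = i.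
Proof. move=> hi h; rewrite /xmon /mmul /mexp msvar Tval.
have -> : (m <= c < m + n.-2) = true by lia. rewrite mul1n; lia. Qed.
Lemma yval_s m n j c : c < m -> ymon m n j c = 1.
Proof. move=> h; rewrite /ymon /mmul /mexp msvar Tval (mtvar m 0).
have -> : (m <= c < m + n.-2) = false by lia. rewrite mul0n; lia. Qed.
Lemma yval_t m n j c : m <= c < m + n.-2 -> ymon m n j c = m.-1 + (c < m + j.-1).
Proof. move=> h; rewrite /ymon /mmul /mexp msvar Tval (mtvar m 0).
have -> : (m <= c < m + n.-2) = true by lia. rewrite mul1n; lia. Qed.

Lemma zmap m n c : [seq f c | f <- zseq m n] =
  0 :: [seq xmon m n i c | i <- iota 1 m.-1] ++ [seq ymon m n j c | j <- iota 1 n.-1]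
    ++ [seq xmon m n i c + ymon m n j c | i <- iota 1 m.-1, j <- iota 1 n.-1].
Proof.
rewrite /zseq /= !map_cat map_flatten -!map_comp; congr (_ :: _ ++ _ ++ flatten _).
by apply: eq_map => i /=; rewrite -map_comp.
Qed.

Lemma pw_map_iota (f : nat -> nat) a k :
  (forall i j, a <= i -> i <= j -> j < a + k -> f i <= f j) ->
  pairwise leq [seq f i | i <- iota a k].
Proof.
elim: k a => [|k IH] a h //=.
apply/andP; split.
  apply/allP => y /mapP [j]; rewrite mem_iota => hj ->; apply: h; lia.
apply: IH => i j hi hij hj; apply: h; lia.
Qed.

Lemma allrel_map_iota (f g : nat -> nat) a k b l :
  (forall i j, a <= i < a + k -> b <= j < b + l -> f i <= g j) ->
  allrel leq [seq f i | i <- iota a k] [seq g i | i <- iota b l].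
Proof.
move=> h; apply/allrelP => x y /mapP [i hi ->] /mapP [j hj ->].
rewrite mem_iota in hi; rewrite mem_iota in hj; exact: h.
Qed.

Lemma allrel_flat (S : seq nat) (B : nat -> seq nat) a k :
  (forall i, a <= i < a + k -> allrel leq S (B i)) ->
  allrel leq S (flatten [seq B i | i <- iota a k]).
Proof.
move=> h; apply/allrelP => x y hx /flatten_mapP [i hi hy].
rewrite mem_iota in hi; exact: (allrelP (h i hi)).
Qed.

Lemma pw_flat (B : nat -> seq nat) a k :
  (forall i, a <= i < a + k -> pairwise leq (B i)) ->
  (forall i i', a <= i -> i < i' -> i' < a + k -> allrel leq (B i) (B i')) ->
  pairwise leq (flatten [seq B i | i <- iota a k]).
Proof.
elim: k a => [|k IH] a h1 h2 //=.
rewrite pairwise_cat; apply/and3P; split.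
- apply: allrel_flat => i hi; apply: h2; lia.
- apply: h1; lia.
- apply: IH => [i hi|i i' hi hii' hi']; [apply: h1|apply: h2]; lia.
Qed.

Lemma zsorted m n c : 0 < m -> c < m + n.-2 ->
  pairwise leq [seq f c | f <- zseq m n].
Proof.
move=> hm hc; rewrite zmap pairwise_cons; apply/andP; split; first by apply/allP.
rewrite !pairwise_cat allrel_catr; apply/and5P; split.
- apply/andP; split.
  + apply: allrel_map_iota => i j hi hj; case: (ltnP c m) => hc'.
      rewrite xval_s // yval_s //; lia.
    rewrite xval_t ?yval_t; lia.
  + apply: allrel_flat => i' hi'; apply: allrel_map_iota => i j hi hj.
    case: (ltnP c m) => hc'.
      rewrite !xval_s // yval_s //; lia.
    rewrite !xval_t ?yval_t; lia.
- apply: pw_map_iota => i j hi hij hj; case: (ltnP c m) => hc'.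
    rewrite !xval_s //; lia.
  rewrite !xval_t; lia.
- apply: allrel_flat => i' hi'; apply: allrel_map_iota => i j hi hj.
  case: (ltnP c m) => hc'.
    rewrite !xval_s // !yval_s //; lia.
  rewrite !xval_t ?yval_t; lia.
- apply: pw_map_iota => i j hi hij hj; case: (ltnP c m) => hc'.
    rewrite !yval_s //; lia.
  rewrite !yval_t; lia.
- apply: pw_flat => [i hi|i i' hi hii' hi'].
    apply: pw_map_iota => j j' hj hjj' hj'; case: (ltnP c m) => hc'.
      rewrite !yval_s //; lia.
    rewrite !yval_t; lia.
  apply: allrel_map_iota => j j' hj hj'; case: (ltnP c m) => hc'.
    rewrite !xval_s // !yval_s //; lia.
  rewrite !xval_t ?yval_t; lia.
Qed.

Lemma zsize m n : 0 < m -> 0 < n -> size (zseq m n) = m * n.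
Proof.
move=> hm hn; rewrite /zseq /= !size_cat !size_map !size_iota size_allpairs !size_iota.
nia.
Qed.

Theorem mainTheorem14 (m n : nat) (hm : 0 < m) (hn : 0 < n)
  (sigma : 'S_(m * n)) (lam : seq nat)
  (hlam : is_partition lam) (hlen : size lam <= m * n) :
  exp_ge m n (lvec m n lam sigma) (lvec m n lam 1%g).
Proof.
move=> c hc.
pose W (q : 'I_(m * n)) := nth mone (zseq m n) q c.
pose a (k : 'I_(m * n)) := nth 0 lam k + (m * n - k.+1).
have E : forall s : 'S_(m * n), lvec m n lam s c = \sum_(q < m * n) W q * a (s q).
  by move=> s; rewrite /lvec mprod_eval big_map big_enum /=.
rewrite !E; under eq_bigr do rewrite perm1.
apply: rearr.
- move=> i j hij; rewrite /W.
  have hs := zsize m n hm hn.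
  rewrite -!(nth_map mone 0 (fun f => f c)) ?hs //.
  move: hij; rewrite leq_eqVlt => /orP [/eqP -> //|hij].
  have /(pairwiseP 0) P := zsorted m n c hm hc.
  have hi : (i : nat) < size [seq f c | f <- zseq m n] by rewrite size_map hs.
  have hj : (j : nat) < size [seq f c | f <- zseq m n] by rewrite size_map hs.
  exact: P.
- move=> i j hij; rewrite /a.
  case/andP: hlam => hs _.
  have h2 : m * n - j.+1 <= m * n - i.+1 by lia.
  apply: leq_add h2.
  case: (ltnP j (size lam)) => hj; last by rewrite (nth_default 0 hj).
  have hi : (i : nat) < size lam by apply: leq_ltn_trans hij hj.
  apply: (sorted_leq_nth _ _ 0 hs) => //.
  by move=> x y z h1 h2'; apply: leq_trans h2' h1.
  by move=> x; exact: leqnn.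
Qed.
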